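(* Let $P_0,P_1,P_2\in\mathbb H$ be distinct, let $\varepsilon\in\{-1,1\}$, and for $i\in\mathbb Z/3\mathbb Z$ let $$R_i:=\frac{\sqrt{1-2\langle P_{i+1},P_{i+2}\rangle}(P_{i+1}+P_{i+2})+\varepsilon P_{i+1}\tilde\times P_{i+2}}{\sqrt3(1-\langle P_{i+1},P_{i+2}\rangle)}.$$ Let $\alpha:=-1+\langle P_0,P_1\rangle+\langle P_1,P_2\rangle+\langle P_2,P_0\rangle$, $\chi:=\langle P_0\tilde\times P_1,P_2\rangle$, $d_i:=\sqrt{1-2\langle P_{i+1},P_{i+2}\rangle}$ and $\gamma:=3(d_0^2+1)(d_1^2+1)(d_2^2+1)$. Then for every $i\in\mathbb Z/3\mathbb Z$, $$\gamma\langle R_{i+1},R_{i+2}\rangle=(d_i^2+1)\Bigl(4\bigl(\alpha d_{i+1}d_{i+2}+\varepsilon\chi(d_{i+1}+d_{i+2})\bigr)-(d_{i+1}^2-1)(d_{i+2}^2-1)+2(d_i^2-1)\Bigr)$$ and $$\gamma\bigl(\langle R_{i+2},R_i\rangle-\langle R_i,R_{i+1}\rangle\bigr)=4(d_{i+2}-d_{i+1})\Bigl(\alpha(d_0+d_1+d_2-d_0d_1d_2)+\varepsilon\chi(1-d_0d_1-d_1d_2-d_2d_0)\Bigr).$$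
   Context: $\langle v,w\rangle=-v_1w_1+v_2w_2+v_3w_3$ on $\mathbb R^3$; $\mathbb H=\{P\in\mathbb R^3:\langle P,P\rangle=-1,\ P_1\ge1\}$; $v\tilde\times w:=J(v\times w)$ with $J=\mathrm{diag}(-1,1,1)$ and $\times$ the Euclidean cross product. $R_i$ is the centroid of the equilateral triangle erected (on the side determined by $\varepsilon$) on the side $P_{i+1}P_{i+2}$, i.e. the vertices of the Napoleonization of $P_0P_1P_2$. *)

(* Defs.v *)
From Stdlib Require Import Reals Lra.
Open Scope R_scope.

Record V3 := mkV3 { x1 : R; x2 : R; x3 : R }.

Definition lor (v w : V3) : R := - x1 v * x1 w + x2 v * x2 w + x3 v * x3 w.

Definition inH (P : V3) : Prop := lor P P = -1 /\ 1 <= x1 P.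

Definition cross (v w : V3) : V3 :=
  mkV3 (x2 v * x3 w - x3 v * x2 w)
       (x3 v * x1 w - x1 v * x3 w)
       (x1 v * x2 w - x2 v * x1 w).
Definition Jmap (v : V3) : V3 := mkV3 (- x1 v) (x2 v) (x3 v).
Definition lcross (v w : V3) : V3 := Jmap (cross v w).

Definition vadd (v w : V3) : V3 := mkV3 (x1 v + x1 w) (x2 v + x2 w) (x3 v + x3 w).
Definition vscale (a : R) (v : V3) : V3 := mkV3 (a * x1 v) (a * x2 v) (a * x3 v).

(* Indices in Z/3Z represented by naturals taken mod 3. *)
Definition pick3 (P0 P1 P2 : V3) (i : nat) : V3 :=
  match (i mod 3)%nat with 0%nat => P0 | 1%nat => P1 | _ => P2 end.

Definition napR (P0 P1 P2 : V3) (eps : R) (i : nat) : V3 :=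
  let A := pick3 P0 P1 P2 (i + 1) in
  let B := pick3 P0 P1 P2 (i + 2) in
  vscale (/ (sqrt 3 * (1 - lor A B)))
    (vadd (vscale (sqrt (1 - 2 * lor A B)) (vadd A B)) (vscale eps (lcross A B))).

Definition alphaP (P0 P1 P2 : V3) : R :=
  -1 + lor P0 P1 + lor P1 P2 + lor P2 P0.
Definition chiP (P0 P1 P2 : V3) : R := lor (lcross P0 P1) P2.
Definition dP (P0 P1 P2 : V3) (i : nat) : R :=
  sqrt (1 - 2 * lor (pick3 P0 P1 P2 (i + 1)) (pick3 P0 P1 P2 (i + 2))).
Definition gammaP (P0 P1 P2 : V3) : R :=
  3 * (dP P0 P1 P2 0 ^ 2 + 1) * (dP P0 P1 P2 1 ^ 2 + 1) * (dP P0 P1 P2 2 ^ 2 + 1).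

(* Main.v *)
Require Import Defs.
From Stdlib Require Import Reals Lra Psatz.
Open Scope R_scope.

Lemma lor_le P Q : inH P -> inH Q -> lor P Q <= -1.
Proof.
  intros [HP H1] [HQ H2].
  destruct P as [a1 a2 a3], Q as [b1 b2 b3]; unfold lor in *; simpl in *.
  assert (Hcs : (a2*b2+a3*b3)^2 <= (a2*a2+a3*a3)*(b2*b2+b3*b3)) by (pose proof (pow2_ge_0 (a2*b3-a3*b2)); nra).
  assert (Ham : 2*(a2*b2+a3*b3) <= (a2*a2+a3*a3)+(b2*b2+b3*b3)) by (pose proof (pow2_ge_0 (a2-b2)); pose proof (pow2_ge_0 (a3-b3)); nra).
  assert (Hsq : (1 + (a2*b2+a3*b3))^2 <= (a1*b1)^2) by nra.
  assert (0 < a1*b1) by nra.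
  destruct (Rle_or_lt (1 + (a2*b2+a3*b3)) 0); nra.
Qed.

Lemma napform A B C D k l d e eps :
  lor (vscale k (vadd (vscale d (vadd A B)) (vscale eps (lcross A B))))
      (vscale l (vadd (vscale e (vadd C D)) (vscale eps (lcross C D)))) =
  k * l * ( d*e*(lor A C + lor A D + lor B C + lor B D)
   + d*eps*(lor A (lcross C D) + lor B (lcross C D))
   + eps*e*(lor (lcross A B) C + lor (lcross A B) D)
   + eps*eps*(-(lor A C * lor B D - lor A D * lor B C))).
Proof. destruct A, B, C, D; unfold lor, lcross, cross, Jmap, vscale, vadd; simpl; ring. Qed.

Lemma inv_sq3 a b : / (sqrt 3 * a) * / (sqrt 3 * b) = / (3 * a * b).
Proof.
  rewrite <- Rinv_mult. f_equal.
  replace (sqrt 3 * a * (sqrt 3 * b)) with (sqrt 3 * sqrt 3 * a * b) by ring.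
  rewrite sqrt_sqrt; lra.
Qed.

Lemma atoms (P0 P1 P2 : V3) :
  lor P0 P2 = lor P2 P0 /\
  lor P1 P0 = lor P0 P1 /\
  lor P2 P1 = lor P1 P2 /\
  lor (lcross P0 P1) P0 = 0 /\
  lor P0 (lcross P0 P1) = 0 /\
  lor (lcross P0 P2) P0 = 0 /\
  lor P0 (lcross P0 P2) = 0 /\
  lor (lcross P1 P0) P0 = 0 /\
  lor P0 (lcross P1 P0) = 0 /\
  lor (lcross P1 P2) P0 = chiP P0 P1 P2 /\
  lor P0 (lcross P1 P2) = chiP P0 P1 P2 /\
  lor (lcross P2 P0) P0 = 0 /\
  lor P0 (lcross P2 P0) = 0 /\
  lor (lcross P2 P1) P0 = - chiP P0 P1 P2 /\
  lor P0 (lcross P2 P1) = - chiP P0 P1 P2 /\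
  lor (lcross P0 P1) P1 = 0 /\
  lor P1 (lcross P0 P1) = 0 /\
  lor (lcross P0 P2) P1 = - chiP P0 P1 P2 /\
  lor P1 (lcross P0 P2) = - chiP P0 P1 P2 /\
  lor (lcross P1 P0) P1 = 0 /\
  lor P1 (lcross P1 P0) = 0 /\
  lor (lcross P1 P2) P1 = 0 /\
  lor P1 (lcross P1 P2) = 0 /\
  lor (lcross P2 P0) P1 = chiP P0 P1 P2 /\
  lor P1 (lcross P2 P0) = chiP P0 P1 P2 /\
  lor (lcross P2 P1) P1 = 0 /\
  lor P1 (lcross P2 P1) = 0 /\
  lor (lcross P0 P1) P2 = chiP P0 P1 P2 /\
  lor P2 (lcross P0 P1) = chiP P0 P1 P2 /\
  lor (lcross P0 P2) P2 = 0 /\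
  lor P2 (lcross P0 P2) = 0 /\
  lor (lcross P1 P0) P2 = - chiP P0 P1 P2 /\
  lor P2 (lcross P1 P0) = - chiP P0 P1 P2 /\
  lor (lcross P1 P2) P2 = 0 /\
  lor P2 (lcross P1 P2) = 0 /\
  lor (lcross P2 P0) P2 = 0 /\
  lor P2 (lcross P2 P0) = 0 /\
  lor (lcross P2 P1) P2 = 0 /\
  lor P2 (lcross P2 P1) = 0.
Proof. destruct P0, P1, P2; unfold chiP, lor, lcross, cross, Jmap; simpl; repeat split; ring. Qed.

Lemma pick3_0 P0 P1 P2 : pick3 P0 P1 P2 0 = P0. Proof. reflexivity. Qed.
Lemma pick3_1 P0 P1 P2 : pick3 P0 P1 P2 1 = P1. Proof. reflexivity. Qed.
Lemma pick3_2 P0 P1 P2 : pick3 P0 P1 P2 2 = P2. Proof. reflexivity. Qed.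
Lemma pick3_3 P0 P1 P2 : pick3 P0 P1 P2 3 = P0. Proof. reflexivity. Qed.
Lemma pick3_4 P0 P1 P2 : pick3 P0 P1 P2 4 = P1. Proof. reflexivity. Qed.
Lemma pick3_5 P0 P1 P2 : pick3 P0 P1 P2 5 = P2. Proof. reflexivity. Qed.
Lemma pick3_6 P0 P1 P2 : pick3 P0 P1 P2 6 = P0. Proof. reflexivity. Qed.

Ltac solve_case P0 P1 P2 HP0 HP1 HP2 Heps :=
  unfold napR, gammaP, dP, alphaP; cbv zeta; cbn [Nat.add];
  rewrite ?pick3_0, ?pick3_1, ?pick3_2, ?pick3_3, ?pick3_4, ?pick3_5, ?pick3_6;
  rewrite ?napform, ?inv_sq3;
  destruct (atoms P0 P1 P2) as [E0 [E1 [E2 [E3 [E4 [E5 [E6 [E7 [E8 [E9 [E10 [E11 [E12 [E13 [E14 [E15 [E16 [E17 [E18 [E19 [E20 [E21 [E22 [E23 [E24 [E25 [E26 [E27 [E28 [E29 [E30 [E31 [E32 [E33 [E34 [E35 [E36 [E37 E38]]]]]]]]]]]]]]]]]]]]]]]]]]]]]]]]]]]]]];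
  rewrite ?E0, ?E1, ?E2, ?E3, ?E4, ?E5, ?E6, ?E7, ?E8, ?E9, ?E10, ?E11, ?E12, ?E13, ?E14, ?E15, ?E16, ?E17, ?E18, ?E19, ?E20, ?E21, ?E22, ?E23, ?E24, ?E25, ?E26, ?E27, ?E28, ?E29, ?E30, ?E31, ?E32, ?E33, ?E34, ?E35, ?E36, ?E37, ?E38;
  clear E0 E1 E2 E3 E4 E5 E6 E7 E8 E9 E10 E11 E12 E13 E14 E15 E16 E17 E18 E19 E20 E21 E22 E23 E24 E25 E26 E27 E28 E29 E30 E31 E32 E33 E34 E35 E36 E37 E38;
  assert (Q0 := lor_le _ _ HP1 HP2);
  assert (Q1 := lor_le _ _ HP2 HP0);
  assert (Q2 := lor_le _ _ HP0 HP1);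
  destruct HP0 as [HH0 _]; destruct HP1 as [HH1 _]; destruct HP2 as [HH2 _]; rewrite ?HH0, ?HH1, ?HH2; clear HH0 HH1 HH2;
  generalize (chiP P0 P1 P2); intro ch;
  generalize dependent (lor P1 P2); intros c0 Q0;
  generalize dependent (lor P2 P0); intros c1 Q1;
  generalize dependent (lor P0 P1); intros c2 Q2;
  assert (H0 := sqrt_sqrt (1 - 2*c0) ltac:(lra));
  assert (H1 := sqrt_sqrt (1 - 2*c1) ltac:(lra));
  assert (H2 := sqrt_sqrt (1 - 2*c2) ltac:(lra));
  generalize dependent (sqrt (1 - 2*c0)); intros d0 H0;
  generalize dependent (sqrt (1 - 2*c1)); intros d1 H1;
  generalize dependent (sqrt (1 - 2*c2)); intros d2 H2;
  replace c0 with ((1 - d0*d0)/2) by lra;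
  replace c1 with ((1 - d1*d1)/2) by lra;
  replace c2 with ((1 - d2*d2)/2) by lra;
  destruct Heps as [-> | ->]; split; field; repeat split; nra.

Theorem lemma4p1 (P0 P1 P2 : V3) (eps : R) :
  inH P0 -> inH P1 -> inH P2 ->
  P0 <> P1 -> P1 <> P2 -> P2 <> P0 ->
  (eps = -1 \/ eps = 1) ->
  forall i : nat, (i < 3)%nat ->
    let R_ := napR P0 P1 P2 eps in
    let d := dP P0 P1 P2 in
    let al := alphaP P0 P1 P2 in
    let ch := chiP P0 P1 P2 in
    let ga := gammaP P0 P1 P2 in
    ga * lor (R_ (i + 1)%nat) (R_ (i + 2)%nat) =
      (d i ^ 2 + 1) *
      (4 * (al * d (i + 1)%nat * d (i + 2)%nat + eps * ch * (d (i + 1)%nat + d (i + 2)%nat))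
       - (d (i + 1)%nat ^ 2 - 1) * (d (i + 2)%nat ^ 2 - 1) + 2 * (d i ^ 2 - 1))
    /\
    ga * (lor (R_ (i + 2)%nat) (R_ i) - lor (R_ i) (R_ (i + 1)%nat)) =
      4 * (d (i + 2)%nat - d (i + 1)%nat) *
      (al * (d 0%nat + d 1%nat + d 2%nat - d 0%nat * d 1%nat * d 2%nat)
       + eps * ch * (1 - d 0%nat * d 1%nat - d 1%nat * d 2%nat - d 2%nat * d 0%nat)).
Proof.
  intros HP0 HP1 HP2 _ _ _ Heps i Hi.
  cbv zeta.
  destruct i as [|[|[|i]]]; [ | | | exfalso; apply (Nat.lt_irrefl 3); eapply Nat.le_lt_trans; [ | exact Hi]; repeat apply le_n_S; apply Nat.le_0_l ].
  - solve_case P0 P1 P2 HP0 HP1 HP2 Heps.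
  - solve_case P0 P1 P2 HP0 HP1 HP2 Heps.
  - solve_case P0 P1 P2 HP0 HP1 HP2 Heps.
Qed.
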